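(* Let $\mathcal X,\mathcal Y$ be complex Hilbert spaces and $A:\mathcal X\supset\operatorname{dom}A\to\mathcal Y$ a closed, densely defined linear operator with $\|Ax\|_{\mathcal Y}\ge c\|x\|_{\mathcal X}$ for some $c>0$ and all $x\in\operatorname{dom}A$. Let $\mathcal X_h$ denote $\operatorname{dom}A$ with inner product $\langle x,y\rangle_{\mathcal X_h}=\langle Ax,Ay\rangle_{\mathcal Y}$, and $\mathcal Z_h:=\mathcal X_h\times\mathcal X$ with the product inner product. Let $B:\mathcal Y\supset\operatorname{dom}B\to\mathcal X$ be closed, densely defined, with $A^*\subset-B$. Define $\mathcal A:\mathcal Z_h\supset\operatorname{dom}\mathcal A\to\mathcal Z_h$ by $\operatorname{dom}\mathcal A=\{(z_1,z_2)\in\mathcal X_h\times\mathcal X_h:\ Az_1\in\operatorname{dom}B\}$, $\mathcal A(z_1,z_2)=(z_2,\,BAz_1)$, and $\mathcal A_{\mathrm s}:\mathcal Z_h\supset\operatorname{dom}\mathcal A_{\mathrm s}\to\mathcal Z_h$ by $\operatorname{dom}\mathcal A_{\mathrm s}=\{(z_1,z_2)\in\mathcal X_h\times\mathcal X_h:\ z_1\in\operatorname{dom}(A^*A)\}$, $\mathcal A_{\mathrm s}(z_1,z_2)=(z_2,\,-A^*Az_1)$. Then $\mathcal A$ is densely defined and closed in $\mathcal Z_h$, $\mathcal A_{\mathrm s}\subset\mathcal A$, and $\mathcal A^*\subset-\mathcal A$ (adjoint taken in $\mathcal Z_h$).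
   Context: $\mathcal X_h$ is a Hilbert space (its norm equals $\|(A^*A)^{1/2}\cdot\|_{\mathcal X}$). For operators, $T_1\subset T_2$ means $T_2$ extends $T_1$. The domain of $\mathcal A_{\mathrm s}$ is equivalently the set of $(z_1,z_2)\in\mathcal X_h\times\mathcal X_h$ for which the functional $y\mapsto\langle Az_1,Ay\rangle_{\mathcal Y}$ on $\mathcal X_h$ is represented by an element of $\mathcal X$ (i.e. $Sz_1\in\mathcal X$ for the extension $S:\mathcal X_h\to\mathcal X_h^*$ of $A^*A$). *)

(* Defs.v *)
From HB Require Import structures.
From mathcomp Require Import all_boot all_order all_algebra.
From mathcomp Require Import reals.
From mathcomp.real_closed Require Import complex.
Set Implicit Arguments. Unset Strict Implicit. Unset Printing Implicit Defensive.
Import Order.TTheory GRing.Theory Num.Theory.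
Local Open Scope ring_scope.

Section Hilb.
Variable R : realType.
Local Notation C := (R[i]).

Definition is_inner_product (V : lmodType C) (ip : V -> V -> C) : Prop :=
  [/\ (forall (a : C) (x y z : V), ip (a *: x + y) z = a * ip x z + ip y z),
      (forall x y : V, ip y x = conjc (ip x y)),
      (forall x : V, 0 <= ip x x) &
      (forall x : V, ip x x = 0 -> x = 0)].

Definition nrm (V : lmodType C) (ip : V -> V -> C) (x : V) : R :=
  Num.sqrt (complex.Re (ip x x)).

Definition cvg_ip (V : lmodType C) (ip : V -> V -> C) (u : nat -> V) (l : V) :=
  forall e : R, 0 < e -> exists N : nat, forall n, (N <= n)%N -> nrm ip (u n - l) < e.

Definition cauchy_ip (V : lmodType C) (ip : V -> V -> C) (u : nat -> V) :=
  forall e : R, 0 < e -> exists N : nat, forall m n, (N <= m)%N -> (N <= n)%N ->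
    nrm ip (u m - u n) < e.

Definition is_hilbert (V : lmodType C) (ip : V -> V -> C) : Prop :=
  is_inner_product ip /\
  forall u : nat -> V, cauchy_ip ip u -> exists l, cvg_ip ip u l.

Definition is_lin_op (V W : lmodType C) (dom : V -> Prop) (f : V -> W) : Prop :=
  [/\ dom 0,
      (forall (a : C) x y, dom x -> dom y -> dom (a *: x + y)) &
      (forall (a : C) x y, dom x -> dom y -> f (a *: x + y) = a *: f x + f y)].

Definition dense_in (V : lmodType C) (ip : V -> V -> C) (S dom : V -> Prop) :=
  forall x, S x -> forall e : R, 0 < e -> exists y, dom y /\ nrm ip (x - y) < e.

Definition closed_op_in (V : lmodType C) (ip : V -> V -> C) (S dom : V -> Prop)
  (f : V -> V) :=
  forall (u : nat -> V) x y, (forall n, dom (u n)) -> S x -> S y ->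
    cvg_ip ip u x -> cvg_ip ip (fun n => f (u n)) y -> dom x /\ f x = y.

Definition closed_op (V W : lmodType C) (ipV : V -> V -> C) (ipW : W -> W -> C)
  (dom : V -> Prop) (f : V -> W) :=
  forall (u : nat -> V) x y, (forall n, dom (u n)) ->
    cvg_ip ipV u x -> cvg_ip ipW (fun n => f (u n)) y -> dom x /\ f x = y.

(* graph of the Hilbert-space adjoint of f : V ⊃ dom -> W:
   (y, z) is in the graph of f^* iff <f x, y>_W = <x, z>_V for all x in dom *)
Definition adj_graph (V W : lmodType C) (ipV : V -> V -> C) (ipW : W -> W -> C)
  (dom : V -> Prop) (f : V -> W) (y : W) (z : V) : Prop :=
  forall x, dom x -> ipW (f x) y = ipV x z.

(* The space Z_h = X_h x X, realised as the subset {(z1,z2) | z1 \in dom A}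
   of X x X, with inner product <(x1,x2),(y1,y2)> = <A x1, A y1>_Y + <x2,y2>_X. *)
Definition Zh_set (X : lmodType C) (domA : X -> Prop) (p : X * X) : Prop := domA p.1.

Definition Zh_ip (X Y : lmodType C) (ipX : X -> X -> C) (ipY : Y -> Y -> C)
  (A : X -> Y) (p q : X * X) : C := ipY (A p.1) (A q.1) + ipX p.2 q.2.

Definition calA_dom (X Y : lmodType C) (domA : X -> Prop) (A : X -> Y)
  (domB : Y -> Prop) (p : X * X) : Prop :=
  [/\ domA p.1, domA p.2 & domB (A p.1)].

Definition calA (X Y : lmodType C) (A : X -> Y) (B : Y -> X) (p : X * X) : X * X :=
  (p.2, B (A p.1)).

End Hilb.

(* Main.v *)
Require Import Defs.
From HB Require Import structures.
From mathcomp Require Import all_boot all_order all_algebra.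
From mathcomp Require Import reals.
From mathcomp.real_closed Require Import complex.
From mathcomp Require Import boolp classical_sets.
From mathcomp.algebra_tactics Require Import ring lra.
Import Order.TTheory GRing.Theory Num.Theory.
Local Open Scope ring_scope.

Module Helpers.
Set Implicit Arguments. Unset Strict Implicit. Unset Printing Implicit Defensive.
Local Open Scope complex_scope.
Section CX.
Variable R : realType.
Local Notation C := (R[i]).

Definition qn (w : C) : R := complex.Re w ^+ 2 + complex.Im w ^+ 2.

Lemma mulJ (w : C) : w * conjc w = (qn w)%:C.
Proof. case: w => a b; rewrite /qn /=. simpc. apply/eqP; rewrite eq_complex /=; apply/andP; split; apply/eqP; ring. Qed.

Lemma Jmul (w : C) : conjc w * w = (qn w)%:C.
Proof. by rewrite mulrC mulJ. Qed.

Lemma qn_ge0 w : 0 <= qn w.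
Proof. rewrite /qn; apply: addr_ge0; exact: sqr_ge0. Qed.

Lemma qn_eq0 w : qn w <= 0 -> w = 0.
Proof.
case: w => a b; rewrite /qn /= => h.
have ha : a ^+ 2 = 0 by apply/eqP; rewrite eq_le sqr_ge0 andbT; nra.
have hb : b ^+ 2 = 0 by apply/eqP; rewrite eq_le sqr_ge0 andbT; nra.
by move/eqP: ha; rewrite sqrf_eq0 => /eqP ->; move/eqP: hb; rewrite sqrf_eq0 => /eqP ->.
Qed.

Lemma ge0C (w : C) : 0 <= w -> w = (complex.Re w)%:C /\ 0 <= complex.Re w.
Proof. case: w => a b; rewrite lecE /= => /andP[/eqP -> h]; by split. Qed.

Lemma ReD (x y : C) : complex.Re (x + y) = complex.Re x + complex.Re y.
Proof. by case: x; case: y. Qed.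
Lemma ReN (x : C) : complex.Re (- x) = - complex.Re x.
Proof. by case: x. Qed.
Lemma ReR (x : R) : complex.Re (x%:C) = x.
Proof. by []. Qed.
Lemma ReJ (x : C) : complex.Re (conjc x) = complex.Re x.
Proof. by case: x. Qed.
Lemma ReM (x y : C) : complex.Re (x * y) = complex.Re x * complex.Re y - complex.Im x * complex.Im y.
Proof. by case: x; case: y. Qed.
Lemma RC_M (x y : R) : (x * y)%:C = x%:C * y%:C :> C.
Proof. by rewrite rmorphM. Qed.
Lemma Re_le_qn (x : C) : complex.Re x ^+ 2 <= qn x.
Proof. rewrite /qn; rewrite lerDl; exact: sqr_ge0. Qed.
Lemma qnJ x : qn (conjc x) = qn x.
Proof. case: x => a b; rewrite /qn /=; ring. Qed.
Lemma qnM x y : qn (x * y) = qn x * qn y.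
Proof. case: x => a b; case: y => c d; rewrite /qn /=; ring. Qed.
Lemma qnR (x : R) : qn x%:C = x ^+ 2.
Proof. rewrite /qn /=; ring. Qed.
Lemma JD (x y : C) : conjc (x + y) = conjc x + conjc y.
Proof. by case: x => a b; case: y => c d; simpc. Qed.
Lemma JM (x y : C) : conjc (x * y) = conjc x * conjc y.
Proof. by case: x => a b; case: y => c d; apply/eqP; rewrite eq_complex /=; apply/andP; split; apply/eqP; ring. Qed.
Lemma JN (x : C) : conjc (- x) = - conjc x.
Proof. by case: x => a b; simpc. Qed.
Lemma J0 : conjc (0 : C) = 0.
Proof. by apply/eqP; rewrite eq_complex /= oppr0 !eqxx. Qed.
Lemma J1 : conjc (1 : C) = 1.
Proof. by apply/eqP; rewrite eq_complex /= oppr0 !eqxx. Qed.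
Lemma JK (x : C) : conjc (conjc x) = x.
Proof. by case: x => a b; simpc. Qed.
Lemma JR (x : R) : conjc (x%:C) = x%:C.
Proof. by apply/eqP; rewrite eq_complex /= oppr0 !eqxx. Qed.
Lemma JV (x : C) : conjc (x^-1) = (conjc x)^-1.
Proof. exact: conjc_inv. Qed.
Lemma inv_small (e : R) : 0 < e -> exists N : nat, forall n, (N <= n)%N -> n.+1%:R^-1 < e.
Proof.
move=> e0; have [k hk] := ltr_add_invr e0; rewrite add0r in hk.
exists k => n hn; apply: le_lt_trans hk.
rewrite lef_pV2 ?posrE ?ltr0Sn // ler_nat; by [].
Qed.
Lemma sqrt_lt (z e : R) : 0 < e -> (Num.sqrt z < e) = (z < e ^+ 2).
Proof.
move=> e0; case: (ltP z 0) => hz.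
  rewrite ltr0_sqrtr // e0; symmetry; apply: lt_le_trans hz _; exact: sqr_ge0.
by rewrite -{1}(ger0_norm (ltW e0)) -sqrtr_sqr ltr_sqrt // exprn_gt0.
Qed.
Lemma sqrt_le (z c : R) : 0 <= c -> z <= c ^+ 2 -> Num.sqrt z <= c.
Proof.
move=> c0 hz; rewrite -(ger0_norm c0) -sqrtr_sqr; exact: ler_wsqrtr.
Qed.
Lemma small_le0 (x : R) : (forall e, 0 < e -> x < e) -> x <= 0.
Proof. move=> h; case: (leP x 0) => // hx; have := h x hx; by rewrite ltxx. Qed.
Lemma qnD (a b : C) : qn (a + b) <= 2 * qn a + 2 * qn b.
Proof. case: a => a1 a2; case: b => b1 b2; rewrite /qn /=. have h1 := sqr_ge0 (a1 - b1); have h2 := sqr_ge0 (a2 - b2). rewrite !sqrrD; rewrite !sqrrB in h1 h2; lra. Qed.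
End CX.

Section Z.
Variable V : zmodType.
Lemma Z1 (p m l : V) : (p - m) - (p - l) = - (m - l).
Proof. by rewrite !opprB addrC subrKA. Qed.
Lemma Z2 (p a b : V) : p + p - (a + b) = (p - a) + (p - b).
Proof. by rewrite opprD addrACA. Qed.
Lemma Z3 (p a b : V) : (p - a) - (p - b) = b - a.
Proof. by rewrite opprB addrC subrKA. Qed.
Lemma Z4 (z m r : V) : z - r = (z - m - r) + m.
Proof. by rewrite [z - m - r]addrAC subrK. Qed.
Lemma Z5 (p a b : V) : p - (b + a) = (p - a) - b.
Proof. by rewrite opprD addrA addrAC. Qed.
Lemma Z6 (p a l : V) : p - l = (p - a) + (a - l).
Proof. by rewrite addrA subrK. Qed.
End Z.
Section Sub.
Variable R : realType.
Variables (V : lmodType R[i]) (P : V -> Prop).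
Hypothesis P0 : P 0.
Hypothesis Plin : forall (a : R[i]) {x y}, P x -> P y -> P (a *: x + y).
Lemma PD x y : P x -> P y -> P (x + y).
Proof. by move=> hx hy; have := Plin 1 hx hy; rewrite scale1r. Qed.
Lemma PZ a x : P x -> P (a *: x).
Proof. by move=> hx; have := Plin a hx P0; rewrite addr0. Qed.
Lemma PN x : P x -> P (- x).
Proof. by move=> hx; rewrite -scaleN1r; apply: PZ. Qed.
Lemma PB x y : P x -> P y -> P (x - y).
Proof. by move=> hx hy; apply: PD => //; apply: PN. Qed.
End Sub.

Section PH.
Variable R : realType.
Local Notation C := (R[i]).
Variables (V : lmodType C) (S : V -> Prop) (ip : V -> V -> C).
Hypothesis S0 : S 0.
Hypothesis Slin : forall (a : C) {x y},  S x -> S y -> S (a *: x + y).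
Hypothesis iplin : forall (a : C) {x y z}, S x -> S y -> S z ->
  ip (a *: x + y) z = a * ip x z + ip y z.
Hypothesis ipsym : forall {x y}, S x -> S y -> ip y x = conjc (ip x y).
Hypothesis ippos : forall {x}, S x -> 0 <= ip x x.
Hypothesis ipdef : forall {x}, S x -> ip x x = 0 -> x = 0.

Definition n2 x := complex.Re (ip x x).

Let SD x y (hx : S x) (hy : S y) : S (x + y) := PD Slin hx hy.
Let SZ a x (hx : S x) : S (a *: x) := PZ S0 Slin a hx.
Let SN x (hx : S x) : S (- x) := PN S0 Slin hx.
Let SB x y (hx : S x) (hy : S y) : S (x - y) := PB S0 Slin hx hy.

Lemma ipD x y z : S x -> S y -> S z -> ip (x + y) z = ip x z + ip y z.
Proof. by move=> hx hy hz; have := iplin 1 hx hy hz; rewrite scale1r mul1r. Qed.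
Lemma ip0 z : S z -> ip 0 z = 0.
Proof.
move=> hz; have := iplin 1 S0 S0 hz; rewrite scale1r addr0 mul1r => h.
by have := congr1 (fun w => w - ip 0 z) h; rewrite /= addrK subrr.
Qed.
Lemma ipZ a x z : S x -> S z -> ip (a *: x) z = a * ip x z.
Proof. by move=> hx hz; have := iplin a hx S0 hz; rewrite !addr0 ip0 // addr0. Qed.
Lemma ipN x z : S x -> S z -> ip (- x) z = - ip x z.
Proof. by move=> hx hz; rewrite -scaleN1r ipZ // mulN1r. Qed.
Lemma ipB x y z : S x -> S y -> S z -> ip (x - y) z = ip x z - ip y z.
Proof. by move=> hx hy hz; rewrite ipD ?ipN //; apply: SN. Qed.
Lemma ipDr x y z : S x -> S y -> S z -> ip z (x + y) = ip z x + ip z y.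
Proof. by move=> hx hy hz; rewrite (ipsym (SD hx hy) hz) (ipD hx hy hz) JD -(ipsym hx hz) -(ipsym hy hz). Qed.
Lemma ipZr a x z : S x -> S z -> ip z (a *: x) = conjc a * ip z x.
Proof. by move=> hx hz; rewrite (ipsym (SZ a hx) hz) (ipZ a hx hz) JM -(ipsym hx hz). Qed.
Lemma ip0r z : S z -> ip z 0 = 0.
Proof. by move=> hz; rewrite (ipsym S0 hz) ip0 // J0. Qed.
Lemma ipNr x z : S x -> S z -> ip z (- x) = - ip z x.
Proof. by move=> hx hz; rewrite -scaleN1r ipZr // JN J1 mulN1r. Qed.

Lemma ipxx x : S x -> ip x x = (n2 x)%:C.
Proof. by move=> hx; case: (ge0C (ippos hx)). Qed.
Lemma n2_ge0 x : S x -> 0 <= n2 x.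
Proof. by move=> hx; case: (ge0C (ippos hx)). Qed.
Lemma n2_eq0 x : S x -> n2 x <= 0 -> x = 0.
Proof.
move=> hx h; apply: ipdef => //; rewrite ipxx //.
have -> : n2 x = 0 by apply/eqP; rewrite eq_le h n2_ge0.
by [].
Qed.

Lemma n2D x y : S x -> S y -> n2 (x + y) = n2 x + n2 y + 2 * complex.Re (ip x y).
Proof.
move=> hx hy; rewrite /n2 ipD ?ipDr ?ReD //; try exact: SD.
rewrite (ipsym hx hy) ReJ; ring.
Qed.

Lemma n2N x : S x -> n2 (- x) = n2 x.
Proof. by move=> hx; rewrite /n2 ipN ?ipNr ?opprK //; exact: SN. Qed.

Lemma n2B x y : S x -> S y -> n2 (x - y) = n2 x + n2 y - 2 * complex.Re (ip x y).
Proof. by move=> hx hy; rewrite n2D ?n2N ?ipNr ?ReN //; [ring | exact: SN]. Qed.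

Lemma n2Z a x : S x -> n2 (a *: x) = qn a * n2 x.
Proof.
move=> hx; rewrite /n2 ipZ ?ipZr ?mulrA ?mulJ ?ipxx //; last exact: SZ.
by rewrite -rmorphM.
Qed.

Lemma n2E x y (t : R) : S x -> S y ->
  n2 (x - ((t%:C) * ip x y) *: y) = n2 x - 2 * t * qn (ip x y) + t ^+ 2 * qn (ip x y) * n2 y.
Proof.
move=> hx hy; rewrite n2B ?n2Z; try exact: SZ.
  rewrite ipZr // qnM qnR JM JR -[_ * _ * ip x y]mulrA Jmul -rmorphM ReR; ring.
by [].
by [].
Qed.

Lemma CS x y : S x -> S y -> qn (ip x y) <= n2 x * n2 y.
Proof.
move=> hx hy.
have h t : 0 <= n2 x - 2 * t * qn (ip x y) + t ^+ 2 * qn (ip x y) * n2 y.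
  rewrite -n2E //; apply: n2_ge0; apply: SB => //; exact: SZ.
have ha := n2_ge0 hx; have hb := n2_ge0 hy; have hq := qn_ge0 (ip x y).
set a := n2 x in h ha *; set b := n2 y in h hb *; set q := qn (ip x y) in h hq *.
case: (ltrgtP 0 b) => hb0.
- have hu : b^-1 * b = 1 by rewrite mulVf // gt_eqF.
  have := h b^-1; set u := b^-1 in hu *.
  have u0 : 0 < u by rewrite invr_gt0.
  move=> h1.
  have : 0 <= (a - 2 * u * q + u ^+ 2 * q * b) * b by apply: mulr_ge0 => //; exact: ltW.
  have -> : (a - 2 * u * q + u ^+ 2 * q * b) * b = a * b - q * (u * b) * (2 - u * b) by ring.
  rewrite hu; lra.
- by move: hb0; rewrite ltNge hb.
- rewrite -hb0 mulr0.
  case: (ltrgtP 0 q) => hq0 //.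
  have hu : q^-1 * q = 1 by rewrite mulVf // gt_eqF.
  have := h ((a + 1) * q^-1); rewrite -hb0 mulr0 addr0.
  have -> : 2 * ((a + 1) * q^-1) * q = 2 * (a + 1) * (q^-1 * q) by ring.
  rewrite hu; lra.
Qed.

Lemma nrmE x : nrm ip x = Num.sqrt (n2 x).
Proof. by []. Qed.
Lemma nrm_ge0 x : 0 <= nrm ip x.
Proof. exact: sqrtr_ge0. Qed.
Lemma nrm_sq x : S x -> nrm ip x ^+ 2 = n2 x.
Proof. by move=> hx; rewrite nrmE sqr_sqrtr // n2_ge0. Qed.
Lemma nrm_lt x e : 0 < e -> (nrm ip x < e) = (n2 x < e ^+ 2).
Proof. by move=> he; rewrite nrmE sqrt_lt. Qed.
Lemma nrmN x : S x -> nrm ip (- x) = nrm ip x.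
Proof. by move=> hx; rewrite !nrmE n2N. Qed.

Lemma Re_ip_le x y : S x -> S y -> complex.Re (ip x y) <= nrm ip x * nrm ip y.
Proof.
move=> hx hy; have h := CS hx hy; have h2 := Re_le_qn (ip x y).
rewrite -(nrm_sq hx) -(nrm_sq hy) in h.
have := nrm_ge0 x; have := nrm_ge0 y.
set a := nrm ip x in h *; set b := nrm ip y in h *; set r := complex.Re (ip x y) in h2 *.
move=> hb ha; case: (leP r (a * b)) => // hr.
have hab : 0 <= a * b by apply: mulr_ge0.
have : (a * b) ^+ 2 < r ^+ 2 by nra.
rewrite exprMn; lra.
Qed.

Lemma nrmD x y : S x -> S y -> nrm ip (x + y) <= nrm ip x + nrm ip y.
Proof.
move=> hx hy; rewrite [nrm ip (x + y)]nrmE; apply: sqrt_le.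
  by apply: addr_ge0; exact: nrm_ge0.
rewrite n2D // -(nrm_sq hx) -(nrm_sq hy); have := Re_ip_le hx hy.
set a := nrm ip x; set b := nrm ip y; move=> h.
have -> : (a + b) ^+ 2 = a ^+ 2 + b ^+ 2 + 2 * (a * b) by ring.
lra.
Qed.

Lemma nrm_small z : S z -> (forall e, 0 < e -> nrm ip z < e) -> z = 0.
Proof.
move=> hz h; apply: n2_eq0 => //; apply: small_le0 => e he.
have he' : 0 < Num.sqrt e by rewrite sqrtr_gt0.
have := h _ he'; rewrite nrm_lt // sqr_sqrtr //; exact: ltW.
Qed.

Lemma cvg_unique u a b : (forall n, S (u n)) -> S a -> S b ->
  cvg_ip ip u a -> cvg_ip ip u b -> a = b.
Proof.
move=> hu ha hb ca cb; apply/eqP; rewrite -subr_eq0; apply/eqP.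
apply: nrm_small; first exact: SB.
move=> e he; have he2 : 0 < e / 2 by rewrite divr_gt0.
have [N1 h1] := ca _ he2; have [N2 h2] := cb _ he2.
set n := maxn N1 N2.
have := h1 n (leq_maxl _ _); have := h2 n (leq_maxr _ _).
have -> : a - b = - (u n - a) + (u n - b).
  by rewrite opprB addrA subrK.
move=> k2 k1; apply: le_lt_trans (nrmD _ _) _.
- by apply: SN; apply: SB.
- exact: SB.
rewrite nrmN; last exact: SB.
have -> : e = e / 2 + e / 2 by field.
exact: ltrD.
Qed.

Lemma par x y : S x -> S y -> n2 (x - y) + n2 (x + y) = 2 * n2 x + 2 * n2 y.
Proof. by move=> hx hy; rewrite (n2B hx hy) (n2D hx hy); ring. Qed.

Hypothesis complete : forall u, (forall n, S (u n)) -> cauchy_ip ip u ->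
  exists l, S l /\ cvg_ip ip u l.

Section Proj.
Variable M : V -> Prop.
Hypothesis M0 : M 0.
Hypothesis Mlin : forall (a : C) {x y}, M x -> M y -> M (a *: x + y).
Hypothesis MS : forall {x}, M x -> S x.

Lemma proj p : S p -> exists r, S r /\ (forall y, M y -> ip y r = 0) /\
   (forall e, 0 < e -> exists m, M m /\ nrm ip (p - m - r) < e).
Proof.
move=> hp.
pose D := fun z : R => exists m, M m /\ z = n2 (p - m).
have hD : has_inf D.
  split; first by exists (n2 (p - 0)); exists 0.
  by exists 0 => z [m [hm ->]]; apply: n2_ge0; apply: SB => //; exact: MS.
pose d := inf D.
have dle m : M m -> d <= n2 (p - m).
  by move=> hm; apply: (ge_inf hD.2); exists m.
have hk : forall k : nat, exists m, M m /\ n2 (p - m) < d + k.+1%:R^-1.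
  move=> k; have hpos : 0 < k.+1%:R^-1 :> R by rewrite invr_gt0 ltr0Sn.
  by have [z [m [hm ->]] hz] := inf_adherent hpos hD; exists m.
have [mk hmk] := choice hk.
have hmkM k : M (mk k) := (hmk k).1.
have hmkS k : S (mk k) := MS (hmkM k).
pose two : C := (2 : R)%:C.
have two0 : two != 0 by rewrite /two eq_complex /= negb_and pnatr_eq0.
have twoE x : two *: x = x + x.
  by rewrite /two -[2 : R]/(1 + 1) rmorphD rmorph1 scalerDl scale1r.
have bound i j : n2 (mk i - mk j) <= 2 * i.+1%:R^-1 + 2 * j.+1%:R^-1.
  have hx : S (p - mk j) by apply: SB.
  have hy : S (p - mk i) by apply: SB.
  have := par hx hy; rewrite Z3.
  pose w := two^-1 *: (mk j + mk i).
  have hw : M w by rewrite /w -[_ *: _]addr0; apply: Mlin => //; rewrite -[mk j]scale1r; apply: Mlin.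
  have -> : p - mk j + (p - mk i) = two *: (p - w).
    by rewrite -Z2 /w scalerBr scalerA mulfV // scale1r twoE.
  rewrite n2Z; last by apply: SB => //; exact: MS.
  rewrite /two qnR.
  have := dle _ hw; have := (hmk i).2; have := (hmk j).2.
  set X := n2 (p - mk j); set Y := n2 (p - mk i); set P := n2 (p - w); set A := n2 (mk i - mk j); set di := i.+1%:R^-1; set dj := j.+1%:R^-1. have -> : (2 : R) ^+ 2 = 4 by ring. lra.
have cau : cauchy_ip ip mk.
  move=> e he; have he' : 0 < e ^+ 2 / 4 by rewrite divr_gt0 // exprn_gt0.
  have [N hN] := inv_small he'.
  exists N => m n hm hn; rewrite nrm_lt //.
  apply: le_lt_trans (bound m n) _.
  have := hN _ hm; have := hN _ hn; set E := e ^+ 2 in he' *; set a := m.+1%:R^-1; set b := n.+1%:R^-1; lra.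
have [l [hl cvl]] := complete hmkS cau.
have hr : S (p - l) by apply: SB.
exists (p - l); split => //; split; last first.
  move=> e he; have [N hN] := cvl _ he; exists (mk N); split => //.
  by rewrite Z1 nrmN; [exact: hN | apply: SB].
move=> y hy.
have hyS := MS hy.
pose b := n2 y.
have hb : 0 <= b := n2_ge0 hyS.
have lemA n : qn (ip (p - mk n) y) <= n.+1%:R^-1 * (b + 1).
  pose s := (b + 1)^-1.
  have s0 : 0 < s by rewrite invr_gt0; lra.
  have sb : s * (b + 1) = 1 by rewrite mulVf //; apply/eqP => h; lra.
  have ha : S (p - mk n) by apply: SB.
  pose c := s%:C * ip (p - mk n) y.
  have hM : M (c *: y + mk n) by apply: Mlin.
  have := dle _ hM; rewrite Z5 n2E //.
  have := (hmk n).2; have := qn_ge0 (ip (p - mk n) y).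
  rewrite -/b.
  set q := qn _; set a := n2 (p - mk n); set dl := n.+1%:R^-1.
  move=> hq h1 h2.
  have k1 : s ^+ 2 * q * b = s * q - s ^+ 2 * q.
    have : s * b = 1 - s by rewrite -sb; ring.
    move=> sb'; rewrite (_ : s ^+ 2 * q * b = s * q * (s * b)); last by ring.
    by rewrite sb'; ring.
  have k2 : 2 * s * q = 2 * (s * q) by ring.
  rewrite k1 k2 in h2.
  have hv : 0 <= s ^+ 2 * q by apply: mulr_ge0 => //; exact: sqr_ge0.
  have h3 : s * q < dl.
    move: hv h2; set u := s * q; set v := s ^+ 2 * q; lra.
  have -> : q = s * q * (b + 1) by rewrite -mulrA (mulrC q) mulrA sb mul1r.
  have hb1 : 0 < b + 1 by lra.
  by apply: ltW; rewrite ltr_pM2r.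
have keyn n : qn (ip (p - l) y) <= 2 * (n.+1%:R^-1 * (b + 1)) + 2 * (n2 (mk n - l) * b).
  rewrite (Z6 p (mk n)) ipD //.
  all: try (apply: SB => //).
  apply: le_trans (qnD _ _) _.
  apply: lerD; rewrite ler_pM2l //.
  rewrite /b; apply: CS => //; exact: SB.
have hq0 : qn (ip (p - l) y) <= 0.
  apply: small_le0 => e he.
  have hb1 : 0 < b + 1 by lra.
  pose eta := e / (4 * (b + 1)).
  have heta : 0 < eta by rewrite divr_gt0 // mulr_gt0.
  have [N1 h1] := inv_small heta.
  have hse : 0 < Num.sqrt eta by rewrite sqrtr_gt0.
  have [N2 h2] := cvl _ hse.
  have := keyn (maxn N1 N2).
  have k1 := h1 _ (leq_maxl N1 N2).
  have := h2 _ (leq_maxr N1 N2); rewrite nrm_lt ?sqrtr_gt0 // sqr_sqrtr; last exact: ltW.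
  move=> k2.
  have e4 : eta * (4 * (b + 1)) = e by rewrite /eta mulfVK // gt_eqF // mulr_gt0.
  set x1 := _.+1%:R^-1 in k1 *; set x2 := n2 _ in k2 *.
  move=> hkk.
  have : x1 * (b + 1) < eta * (b + 1) by rewrite ltr_pM2r.
  have : x2 * b <= eta * b by apply: ler_wpM2r => //; exact: ltW.
  nra.
have := qn_eq0 hq0 => h0.
by rewrite (ipsym hr hyS) h0 J0.
Qed.
End Proj.

Lemma dense_sub (M : V -> Prop) (M0 : M 0)
  (Mlin : forall (a : C) x y, M x -> M y -> M (a *: x + y))
  (MS : forall x, M x -> S x) :
  (forall r, S r -> (forall y, M y -> ip y r = 0) -> r = 0) ->
  forall p, S p -> forall e, 0 < e -> exists m, M m /\ nrm ip (p - m) < e.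
Proof.
move=> horth p hp e he.
have [r [hr [ho hc]]] := proj M0 Mlin MS hp.
have r0 := horth r hr ho.
have [m [hm hm2]] := hc e he; exists m; split => //.
by move: hm2; rewrite r0 subr0.
Qed.

Lemma riesz (phi : V -> C) (K : R) :
  (forall (a : C) x y, S x -> S y -> phi (a *: x + y) = a * phi x + phi y) ->
  (forall z, S z -> qn (phi z) <= K * n2 z) ->
  exists u, S u /\ forall x, S x -> phi x = ip x u.
Proof.
move=> phil phib.
have phi0 : phi 0 = 0.
  have := phil 1 _ _ S0 S0; rewrite scale1r addr0 mul1r => h.
  by have := congr1 (fun w => w - phi 0) h; rewrite /= addrK subrr.
have phiD x y : S x -> S y -> phi (x + y) = phi x + phi y.
  by move=> hx hy; have := phil 1 _ _ hx hy; rewrite scale1r mul1r.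
have phiZ a x : S x -> phi (a *: x) = a * phi x.
  by move=> hx; have := phil a _ _ hx S0; rewrite !addr0 phi0 addr0.
have phiB x y : S x -> S y -> phi (x - y) = phi x - phi y.
  move=> hx hy; rewrite phiD //; last exact: SN.
  by rewrite -(scaleN1r y) phiZ // mulN1r.
case: (pselect (exists z, S z /\ phi z != 0)); last first.
  move=> hn; exists 0; split => // x hx; rewrite ip0r //.
  apply/eqP; apply: contraT => hne; exfalso; apply: hn; by exists x.
move=> [z [hz phiz]].
pose M := fun x => S x /\ phi x = 0.
have M0 : M 0 by [].
have Mlin (a : C) x y : M x -> M y -> M (a *: x + y).
  move=> [hx px] [hy py]; split; first exact: Slin.
  by rewrite phil // px py mulr0 addr0.
have MS x : M x -> S x by case.
have [r [hr [ho hc]]] := proj M0 Mlin MS hz.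
have hzr : phi (z - r) = 0.
  apply: qn_eq0; apply: small_le0 => e he.
  pose K' := `|K| + 1.
  have hK' : 0 < K' by rewrite /K'; have := normr_ge0 K; lra.
  pose eta := e / K'.
  have heta : 0 < eta by rewrite divr_gt0.
  have hse : 0 < Num.sqrt eta by rewrite sqrtr_gt0.
  have [m [[hmS hm0] hm]] := hc _ hse.
  have hw : S (z - m - r) by apply: SB => //; exact: SB.
  rewrite (Z4 z m r) phiD // hm0 addr0.
  move: hm; rewrite nrm_lt // sqr_sqrtr; last exact: ltW.
  move=> hn.
  have h1 := phib _ hw.
  have hn0 := n2_ge0 hw.
  have hK : K * n2 (z - m - r) <= `|K| * n2 (z - m - r) by apply: ler_wpM2r; [exact: hn0 | exact: ler_norm].
  have : `|K| * n2 (z - m - r) <= `|K| * eta by apply: ler_wpM2l; [exact: normr_ge0 | exact: ltW].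
  have e1 : eta * K' = e by rewrite /eta mulfVK // gt_eqF.
  have : `|K| * eta < K' * eta by rewrite ltr_pM2r // /K'; lra.
  lra.
have phir : phi r = phi z.
  by apply/eqP; rewrite eq_sym -subr_eq0 -phiB // hzr.
have phir0 : phi r != 0 by rewrite phir.
have rr0 : ip r r != 0.
  apply/eqP => h; have r0 := ipdef hr h; move: phir0; by rewrite r0 phi0 eqxx.
exists (conjc (phi r / ip r r) *: r); split; first exact: SZ.
move=> x hx.
pose y := x - (phi x / phi r) *: r.
have hy : S y by apply: SB => //; exact: SZ.
have hMy : M y.
  split => //; rewrite /y phiB ?phiZ //; last exact: SZ.
  by rewrite mulfVK // subrr.
have := ho _ hMy; rewrite /y ipB ?ipZ //; last exact: SZ.
move=> /eqP; rewrite subr_eq0 => /eqP hxr.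
rewrite ipZr // JK hxr.
by field; apply/andP; split.
Qed.
End PH.

Section Aux.
Variable R : realType.
Lemma sqrt_sum_lt (a b e : R) : 0 <= a -> 0 <= b -> 0 < e ->
  Num.sqrt (a + b) < e -> Num.sqrt a < e /\ Num.sqrt b < e.
Proof. move=> ha hb he; rewrite !sqrt_lt // => h; split; lra. Qed.
Lemma sqrt_sum_lt2 (a b e : R) : 0 < e ->
  Num.sqrt a < e / 2 -> Num.sqrt b < e / 2 -> Num.sqrt (a + b) < e.
Proof.
move=> he; have he2 : 0 < e / 2 by rewrite divr_gt0.
rewrite !sqrt_lt //.
have -> : (e / 2) ^+ 2 = e ^+ 2 / 4 by rewrite expr_div_n; congr (_ / _); ring.
have : 0 < e ^+ 2 by rewrite exprn_gt0.
set E := e ^+ 2; lra.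
Qed.

Lemma lin_op0 (V W : lmodType R[i]) (dom : V -> Prop) (f : V -> W) :
  is_lin_op dom f -> f 0 = 0.
Proof.
case=> d0 dl fl; have := fl 1 _ _ d0 d0; rewrite scale1r addr0 scale1r => h.
by have := congr1 (fun w => w - f 0) h; rewrite /= addrK subrr.
Qed.
Lemma lin_opB (V W : lmodType R[i]) (dom : V -> Prop) (f : V -> W) x y :
  is_lin_op dom f -> dom x -> dom y -> f (x - y) = f x - f y.
Proof.
move=> hf hx hy; have f0 := lin_op0 hf; case: hf => d0 dl fl.
by rewrite (addrC x (- y)) -(scaleN1r y) fl // scaleN1r addrC.
Qed.
Lemma lin_opD (V W : lmodType R[i]) (dom : V -> Prop) (f : V -> W) x y :
  is_lin_op dom f -> dom x -> dom y -> f (x + y) = f x + f y.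
Proof. by case=> d0 dl fl hx hy; have := fl 1 _ _ hx hy; rewrite !scale1r. Qed.
Lemma lin_opZ (V W : lmodType R[i]) (dom : V -> Prop) (f : V -> W) a x :
  is_lin_op dom f -> dom x -> f (a *: x) = a *: f x.
Proof.
move=> hf hx; have f0 := lin_op0 hf; case: hf => d0 dl fl.
by have := fl a _ _ hx d0; rewrite !addr0 f0 addr0.
Qed.
End Aux.


End Helpers.
Import Helpers.

Theorem lemma3p2 (R : realType) (X Y : lmodType R[i])
  (ipX : X -> X -> R[i]) (ipY : Y -> Y -> R[i])
  (hX : is_hilbert ipX) (hY : is_hilbert ipY)
  (domA : X -> Prop) (A : X -> Y)
  (linA : is_lin_op domA A)
  (denseA : dense_in ipX (fun _ => True) domA)
  (closedA : closed_op ipX ipY domA A)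
  (c : R) (c_gt0 : 0 < c)
  (coerA : forall x, domA x -> c * nrm ipX x <= nrm ipY (A x))
  (domB : Y -> Prop) (B : Y -> X)
  (linB : is_lin_op domB B)
  (denseB : dense_in ipY (fun _ => True) domB)
  (closedB : closed_op ipY ipX domB B)
  (AadjB : forall (y : Y) (z : X), adj_graph ipX ipY domA A y z ->
             domB y /\ B y = - z) :
  dense_in (Zh_ip ipX ipY A) (Zh_set domA) (calA_dom domA A domB)
  /\ closed_op_in (Zh_ip ipX ipY A) (Zh_set domA) (calA_dom domA A domB) (calA A B)
  /\ (forall (p : X * X) (w : X), domA p.1 -> domA p.2 ->
        adj_graph ipX ipY domA A (A p.1) w ->
        calA_dom domA A domB p /\ calA A B p = (p.2, - w))
  /\ (forall v w : X * X, Zh_set domA v -> Zh_set domA w ->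
        adj_graph (Zh_ip ipX ipY A) (Zh_ip ipX ipY A) (calA_dom domA A domB) (calA A B) v w ->
        calA_dom domA A domB v /\ calA A B v = - w).
Proof.
case: hX => [[linX symX posX defX] compX].
case: hY => [[linY symY posY defY] compY].
have S0X : (fun _ : X => True) 0 by [].
have SlX : forall (a : R[i]) (x y : X), True -> True -> True by [].
have ilX : forall (a : R[i]) (x y z : X), True -> True -> True ->
  ipX (a *: x + y) z = a * ipX x z + ipX y z by move=> *; exact: linX.
have isX : forall x y : X, True -> True -> ipX y x = conjc (ipX x y) by move=> *; exact: symX.
have ipX' : forall x : X, True -> 0 <= ipX x x by move=> *; exact: posX.
have idX : forall x : X, True -> ipX x x = 0 -> x = 0 by move=> x _; exact: defX.
have cX : forall u : nat -> X, (forall n : nat, True) -> cauchy_ip ipX u ->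
  exists l, True /\ cvg_ip ipX u l by move=> u hn hu; have [l hl] := compX u hu; exists l.
have S0Y : (fun _ : Y => True) 0 by [].
have SlY : forall (a : R[i]) (x y : Y), True -> True -> True by [].
have ilY : forall (a : R[i]) (x y z : Y), True -> True -> True ->
  ipY (a *: x + y) z = a * ipY x z + ipY y z by move=> *; exact: linY.
have isY : forall x y : Y, True -> True -> ipY y x = conjc (ipY x y) by move=> *; exact: symY.
have ipY' : forall x : Y, True -> 0 <= ipY x x by move=> *; exact: posY.
have idY : forall x : Y, True -> ipY x x = 0 -> x = 0 by move=> x _; exact: defY.
pose ih := fun x y : X => ipY (A x) (A y).
have A0 := lin_op0 linA.
have B0 := lin_op0 linB.
have [dA0 dAl _] := linA.
have [dB0 dBl _] := linB.
have SlH : forall (a : R[i]) (x y : X), domA x -> domA y -> domA (a *: x + y) by move=> a x y; exact: dAl.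
have ilH : forall (a : R[i]) (x y z : X), domA x -> domA y -> domA z ->
  ih (a *: x + y) z = a * ih x z + ih y z.
  by move=> a x y z hx hy hz; rewrite /ih (lin_opD linA (PZ dA0 dAl a hx) hy) (lin_opZ a linA hx); exact: linY.
have isH : forall x y : X, domA x -> domA y -> ih y x = conjc (ih x y) by move=> *; exact: symY.
have ipH : forall x : X, domA x -> 0 <= ih x x by move=> *; exact: posY.
have coer2 x : domA x -> c ^+ 2 * n2 ipX x <= n2 ipY (A x).
  move=> hx; have h := coerA x hx.
  rewrite -(nrm_sq ipX' I) -(nrm_sq ipY' I) -exprMn.
  by rewrite ler_pXn2r // ?nnegrE ?mulr_ge0 ?nrm_ge0 //; exact: ltW.
have idH : forall x : X, domA x -> ih x x = 0 -> x = 0.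
  move=> x hx h; apply: (n2_eq0 ipX' idX I).
  have h2 : n2 ipY (A x) = 0 by rewrite /n2; move: h; rewrite /ih => ->.
  have := coer2 _ hx; rewrite h2 => h3.
  have hc2 : 0 < c ^+ 2 by rewrite exprn_gt0.
  by rewrite -(pmulr_rle0 _ hc2).
have AB x y : domA x -> domA y -> A (x - y) = A x - A y by move=> hx hy; exact: lin_opB linA hx hy.
have dAB x y : domA x -> domA y -> domA (x - y) by move=> hx hy; exact: (PB dA0 dAl hx hy).
have coerlt z e : domA z -> 0 < e -> nrm ipY (A z) < c * e -> nrm ipX z < e.
  move=> hz he h; have := le_lt_trans (coerA z hz) h; by rewrite ltr_pM2l.
have cH : forall u : nat -> X, (forall n : nat, domA (u n)) -> cauchy_ip ih u ->
  exists l, domA l /\ cvg_ip ih u l.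
  move=> u hu cu.
  have cuY : cauchy_ip ipY (fun n => A (u n)).
    move=> e he; have [N hN] := cu e he; exists N => m n hm hn.
    by rewrite -AB //; exact: hN.
  have cuX : cauchy_ip ipX u.
    move=> e he; have hce : 0 < c * e by rewrite mulr_gt0.
    have [N hN] := cu _ hce; exists N => m n hm hn.
    apply: coerlt => //; first exact: dAB.
    exact: hN.
  have [y hy] := compY _ cuY.
  have [x hx] := compX _ cuX.
  have [hxA hxy] := closedA u x y hu hx hy.
  exists x; split => // e he; have [N hN] := hy e he; exists N => n hn.
  by rewrite /nrm /ih AB // hxy; exact: hN.
have hT f : exists u, domA u /\ adj_graph ipX ipY domA A (A u) f.
  have hlin : forall (a : R[i]) (x y : X), domA x -> domA y ->
      ipX (a *: x + y) f = a * ipX x f + ipX y f.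
    by move=> a x y _ _; exact: linX.
  have hb : forall z, domA z -> qn (ipX z f) <= (n2 ipX f / c ^+ 2) * n2 ih z.
    move=> z hz.
    have h1 := CS S0X SlX ilX isX ipX' (x := z) (y := f) I I.
    apply: le_trans h1 _.
    have hc2 : 0 < c ^+ 2 by rewrite exprn_gt0.
    have h2 := coer2 _ hz.
    have hf := n2_ge0 ipX' (I : (fun _ : X => True) f).
    have hz0 := n2_ge0 ipX' (I : (fun _ : X => True) z).
    rewrite mulrAC ler_pdivlMr //.
    rewrite (mulrC (n2 ipX f)) -mulrA (mulrC (n2 ipX f)) mulrA.
    apply: ler_wpM2r => //.
    by rewrite mulrC.
  have [u [hu hu2]] := riesz dA0 SlH ilH isH ipH idH cH hlin hb.
  by exists u; split => // x hx; rewrite hu2.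
have ip0X z : ipX 0 z = 0 by apply: (ip0 (S := fun _ : X => True)).
have ip0Y z : ipY 0 z = 0 by apply: (ip0 (S := fun _ : Y => True)).
have ipNX x z : ipX (- x) z = - ipX x z by apply: (ipN (S := fun _ : X => True)).
have ipDrX x y z : ipX z (x + y) = ipX z x + ipX z y by apply: (ipDr (S := fun _ : X => True)).
have P3 : forall (p : X * X) (w : X), domA p.1 -> domA p.2 ->
    adj_graph ipX ipY domA A (A p.1) w ->
    calA_dom domA A domB p /\ calA A B p = (p.2, - w).
  move=> p w h1 h2 hadj; have [hb hb2] := AadjB _ _ hadj; split; first by split.
  by rewrite /calA hb2.
have P4 : forall v w : X * X, Zh_set domA v -> Zh_set domA w ->
    adj_graph (Zh_ip ipX ipY A) (Zh_ip ipX ipY A) (calA_dom domA A domB) (calA A B) v w ->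
    calA_dom domA A domB v /\ calA A B v = - w.
  move=> [v1 v2] [w1 w2]; rewrite /Zh_set /= => hv hw hadj.
  have h1 : adj_graph ipX ipY domA A (A v1) w2.
    move=> x2 hx2.
    have hd : calA_dom domA A domB (0, x2) by split => //=; rewrite A0.
    have := hadj _ hd; rewrite /Zh_ip /calA /=.
    by rewrite A0 B0 ip0X ip0Y add0r addr0.
  have [hBv hBv2] := AadjB _ _ h1.
  pose f := v2 + w1.
  have [x1 [hx1 hadj1]] := hT f.
  have [hBx hBx2] := AadjB _ _ hadj1.
  have hd1 : calA_dom domA A domB (x1, 0) by split.
  have := hadj _ hd1; rewrite /Zh_ip /calA /= A0 ip0Y add0r ip0X addr0 hBx2.
  rewrite symY (hadj1 w1 hw) -symX ipNX => h.
  have hff : ipX f f = 0.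
    rewrite {2}/f ipDrX -h; exact: subrr.
  have f0 : f = 0 := defX f hff.
  have v2E : v2 = - w1.
    by apply/eqP; rewrite -addr_eq0; apply/eqP.
  split; first split => //=.
    by rewrite v2E; exact: (PN dA0 dAl).
  by rewrite /calA /= hBv2 v2E.
have nZ p : nrm (Zh_ip ipX ipY A) p = Num.sqrt (n2 ipY (A p.1) + n2 ipX p.2).
  by rewrite /nrm /Zh_ip ReD.
have split_lt p e : 0 < e -> nrm (Zh_ip ipX ipY A) p < e ->
    nrm ipY (A p.1) < e /\ nrm ipX p.2 < e.
  move=> he; rewrite nZ => h.
  exact: sqrt_sum_lt (n2_ge0 ipY' (I : (fun _ : Y => True) (A p.1))) (n2_ge0 ipX' (I : (fun _ : X => True) p.2)) he h.
have P2 : closed_op_in (Zh_ip ipX ipY A) (Zh_set domA) (calA_dom domA A domB) (calA A B).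
  move=> u [x1 x2] [y1 y2] hu; rewrite /Zh_set /= => hx hy cu cy.
  have c1 : cvg_ip ipY (fun n => A (u n).1) (A x1).
    move=> e he; have [N hN] := cu e he; exists N => n hn.
    have [h _] := split_lt _ _ he (hN n hn).
    have [hu1 _ _] := hu n.
    by move: h => /=; rewrite AB.
  have c2 : cvg_ip ipX (fun n => (u n).2) x2.
    move=> e he; have [N hN] := cu e he; exists N => n hn.
    by have [_ h] := split_lt _ _ he (hN n hn).
  have c3 : cvg_ip ipX (fun n => (u n).2) y1.
    move=> e he; have hce : 0 < c * e by rewrite mulr_gt0.
    have [N hN] := cy _ hce; exists N => n hn.
    have [h _] := split_lt _ _ hce (hN n hn).
    have [_ hu2 _] := hu n.
    by apply: coerlt => //; apply: dAB.
  have c4 : cvg_ip ipX (fun n => B (A (u n).1)) y2.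
    move=> e he; have [N hN] := cy e he; exists N => n hn.
    by have [_ h] := split_lt _ _ he (hN n hn).
  have e21 : x2 = y1.
    exact: (cvg_unique S0X SlX ilX isX ipX' idX (u := fun n => (u n).2) (fun _ => I) I I c2 c3).
  have hBu n : domB (A (u n).1) by have [_ _ ?] := hu n.
  have [hB hB2] := closedB _ _ _ hBu c1 c4.
  split; first by split => //=; rewrite e21.
  by rewrite /calA /= e21 hB2.
have P1 : dense_in (Zh_ip ipX ipY A) (Zh_set domA) (calA_dom domA A domB).
  move=> [p1 p2]; rewrite /Zh_set /= => hp e he.
  have he2 : 0 < e / 2 by rewrite divr_gt0.
  pose M := fun x => domA x /\ domB (A x).
  have M0 : M 0 by split => //; rewrite A0.
  have Mlin : forall (a : R[i]) x y, M x -> M y -> M (a *: x + y).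
    move=> a x y [hx hbx] [hy hby]; split; first exact: dAl.
    rewrite (lin_opD linA (PZ dA0 dAl a hx) hy) (lin_opZ a linA hx); exact: dBl.
  have MS : forall x, M x -> domA x by move=> x [].
  have horth : forall r, domA r -> (forall y, M y -> ih y r = 0) -> r = 0.
    move=> r hr ho.
    have [u [hu hadj]] := hT r.
    have [hBu _] := AadjB _ _ hadj.
    have h0 := ho u (conj hu hBu).
    have h1 := hadj r hr.
    apply: defX; rewrite -h1 symY; rewrite /ih in h0; by rewrite h0 J0.
  have [m [[hm hBm] hm2]] := dense_sub dA0 SlH ilH isH ipH cH M0 Mlin MS horth hp he2.
  have [q2 [hq2 hq22]] := denseA p2 I _ he2.
  exists (m, q2); split; first by split.
  rewrite nZ /=; apply: sqrt_sum_lt2 => //.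
by split; [exact: P1 | split; [exact: P2 | split; [exact: P3 | exact: P4]]].
Qed.
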